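(* Let $S=\{v_1,\ldots,v_n\}\subset\mathbb Z^n$ be an orthogonal subset with Wu element $W=\sum_{i=1}^n v_i=\sum_{i=1}^n k_ie_i$, and let $R_o=\{i: k_i\equiv1\pmod2\}$. If $I(S)>n-3|R_o|$, then the lattice generated by $S$ is not cubiquitous.
   Context: $\mathbb Z^n$ carries the standard dot product with standard basis $e_1,\ldots,e_n$. $a_i=\langle v_i,v_i\rangle$ and $I(S)=\sum_{i=1}^n(a_i-3)$. $S$ is orthogonal if $a_i\ge1$ for all $i$ and $\langle v_i,v_j\rangle=0$ for all $i\ne j$. A full-rank sublattice $\Lambda\subset\mathbb Z^n$ is cubiquitous if $\Lambda\cap(x+\{0,1\}^n)\ne\emptyset$ for every $x\in\mathbb Z^n$. *)

(* Defs.v *)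
From mathcomp Require Import all_boot all_order all_algebra.
Set Implicit Arguments. Unset Strict Implicit. Unset Printing Implicit Defensive.
Import Order.TTheory GRing.Theory Num.Theory.
Local Open Scope ring_scope.

(* Vectors of Z^n are functions 'I_n -> int; a family S = {v_1..v_n} is
   v : 'I_n -> ('I_n -> int). *)

Definition dot (n : nat) (u w : 'I_n -> int) : int := \sum_(j < n) u j * w j.

Definition sqnorm (n : nat) (v : 'I_n -> 'I_n -> int) (i : 'I_n) : int :=
  dot (v i) (v i).

Definition Iinv (n : nat) (v : 'I_n -> 'I_n -> int) : int :=
  \sum_(i < n) (sqnorm v i - 3).

Definition orthogonal_set (n : nat) (v : 'I_n -> 'I_n -> int) : Prop :=
  (forall i, 1 <= sqnorm v i) /\ (forall i j, i != j -> dot (v i) (v j) = 0).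

Definition wu (n : nat) (v : 'I_n -> 'I_n -> int) : 'I_n -> int :=
  fun j => \sum_(i < n) v i j.

Definition Ro (n : nat) (v : 'I_n -> 'I_n -> int) : {set 'I_n} :=
  [set j | ~~ (2 %| wu v j)%Z].

Definition lattice_gen (n : nat) (v : 'I_n -> 'I_n -> int) (y : 'I_n -> int) : Prop :=
  exists c : 'I_n -> int, forall j, y j = \sum_(i < n) c i * v i j.

Definition cubiquitous (n : nat) (L : ('I_n -> int) -> Prop) : Prop :=
  forall x : 'I_n -> int, exists y, L y /\
    forall j, y j - x j = 0 \/ y j - x j = 1.

(* Main.v *)
Require Import Defs.
From mathcomp Require Import all_boot all_order all_algebra.
From mathcomp Require Import zify ring lra.
Import Order.TTheory GRing.Theory Num.Theory.
Local Open Scope ring_scope.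

Lemma dot_comb (n : nat) (v : 'I_n -> 'I_n -> int) (b : 'I_n -> int) :
  (forall i j, i != j -> dot (v i) (v j) = 0) ->
  dot (fun j => \sum_(i < n) b i * v i j) (fun j => \sum_(i < n) b i * v i j)
  = \sum_(i < n) b i * b i * sqnorm v i.
Proof.
move=> horth; rewrite /dot.
under eq_bigr => j _ do rewrite mulr_suml.
under eq_bigr => j _ do under eq_bigr => i _ do rewrite mulr_sumr.
rewrite exchange_big /=; apply: eq_bigr => i _.
rewrite exchange_big /= (bigD1 i) //= [X in _ + X]big1 ?addr0.
  rewrite /sqnorm /dot mulr_sumr; apply: eq_bigr => j _; ring.
move=> k hk; have := horth i k; rewrite eq_sym hk => /(_ isT) h.
transitivity (b i * b k * dot (v i) (v k)); last by rewrite h mulr0.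
rewrite /dot mulr_sumr; apply: eq_bigr => j _; ring.
Qed.

Theorem corollary2p6 (n : nat) (v : 'I_n -> 'I_n -> int) :
  orthogonal_set v ->
  (n%:Z - 3 * (#|Ro v|)%:Z < Iinv v) ->
  ~ cubiquitous (lattice_gen v).
Proof.
move=> [hpos horth] hI hcub.
have [y [[c hy] hd]] := hcub (fun j => (wu v j %/ 2)%Z).
pose b i := 1 - 2 * c i.
pose z j := \sum_(i < n) b i * v i j.
have hz : forall j, z j = wu v j - 2 * y j.
  move=> j; rewrite /z hy /wu mulr_sumr -sumrB; apply: eq_bigr => i _.
  rewrite /b; ring.
have E := @dot_comb n v b horth.
have lo : \sum_(i < n) sqnorm v i <= dot z z.
  rewrite /z E; apply: ler_sum => i _.
  have := hpos i; rewrite /b; move: (sqnorm v i) (c i) => a ci ha.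
  have h1 : 0 <= ci * (ci - 1) by nia.
  have : 0 <= ((1 - 2*ci)*(1-2*ci) - 1) * a by apply: mulr_ge0; lia.
  lia.
have hi : dot z z <= \sum_(j < n) (4 - 3 * ((j \in Ro v) : int)).
  rewrite /dot; apply: ler_sum => j _; rewrite hz.
  have := divz_eq (wu v j) 2; have := hd j.
  rewrite /Ro inE; case: (dvdz_mod0P) => hm /=;
  have := modz_ge0 (wu v j) (isT : (2:int) != 0);
  have := ltz_pmod (wu v j) (isT : (0:int) < 2);
  move: (wu v j) ((wu v j) %/ 2)%Z ((wu v j) %% 2)%Z (y j) hm => k q r yj.
    move=> h1 h2 h3 h4 h5.
    have : k - 2*yj = 0 \/ k - 2*yj = -2 by lia.
    by case=> ->.
  move=> h1 h2 h3 h4 h5.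
  have : k - 2*yj = 1 \/ k - 2*yj = -1 by lia.
  by case=> ->.
have hs : \sum_(j < n) (4 - 3 * ((j \in Ro v) : int)) = 4 * n%:Z - 3 * (#|Ro v|)%:Z.
  rewrite sumrB -mulr_sumr sumr_const card_ord.
  rewrite (eq_bigr (fun j => if j \in Ro v then 1 else 0)); last by move=> j _; case: (j \in Ro v).
  rewrite -big_mkcond /= sumr_const.
  rewrite !natz -[Posz n]natz mulr_natr; reflexivity.
move: hI; rewrite /Iinv sumrB sumr_const card_ord.
rewrite -[3 *+ n]mulr_natr natz => hI'.
rewrite hs in hi; move: hI'; rewrite !natz => hI'.
set s := \sum_(i < n) sqnorm v i in hI' lo hi *. have := le_trans lo hi. clearbody s. lia.
Qed.
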